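(* For $0<\alpha<1$ let $$u(\alpha)=\int_{\alpha}^{1}\frac{(1-\rho^2)^{\frac{2m-1}{2}}}{\{1-(1-\rho^2)^m\}^{\frac{2m-1}{2m}}}\,d\rho .$$ Then $u$ is finite on $(0,1)$, $u(\alpha)\to0$ and $u'(\alpha)\to0$ as $\alpha\to1^-$, and $u(\alpha)\to+\infty$ as $\alpha\to0^+$. The rotational surfaces $(\alpha\cos v,\alpha\sin v,\pm u(\alpha))$, $0<\alpha<1$, have constant Minkowski Gaussian curvature $-1$.
   Context: Fix an integer $m\ge 2$. Let $\Phi(x_1,x_2,x_3)=(x_1^2+x_2^2)^m+x_3^{2m}$ and let $\|\cdot\|$ be the norm on $\mathbb{R}^3$ whose unit sphere is $S=\{x\in\mathbb{R}^3:\Phi(x)=1\}$ (a smooth, strictly convex surface). For a surface given by a parametrization $f(s,v)$, its Birkhoff–Gauss map $\eta$ is the map into $S$ defined by requiring $\eta\in S$ and $\nabla\Phi(\eta)=\mu\, f_s\times f_v$ for some function $\mu>0$, where $\times$ is the standard cross product (so the tangent plane of $S$ at $\eta(p)$ is parallel to $T_pM$, and $d\eta_p$ is an endomorphism of $T_pM$). The Minkowski Gaussian curvature is $K=\det(d\eta_p)$ (independent of orientation). *)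

(* Defs.v *)
From Stdlib Require Import Reals.
From Coquelicot Require Import Coquelicot.
Open Scope R_scope.

Record V3 : Type := mkV3 { c1 : R ; c2 : R ; c3 : R }.

Definition vadd (a b : V3) : V3 := mkV3 (c1 a + c1 b) (c2 a + c2 b) (c3 a + c3 b).
Definition vscal (k : R) (a : V3) : V3 := mkV3 (k * c1 a) (k * c2 a) (k * c3 a).
Definition cross (a b : V3) : V3 :=
  mkV3 (c2 a * c3 b - c3 a * c2 b)
       (c3 a * c1 b - c1 a * c3 b)
       (c1 a * c2 b - c2 a * c1 b).

(** Real power x^y for x >= 0, with the convention 0^y = 0 (used only for y > 0). *)
Definition rpow (x y : R) : R := if Rlt_dec 0 x then Rpower x y else 0.

Definition Phi (m : nat) (x : V3) : R :=
  (c1 x ^ 2 + c2 x ^ 2) ^ m + c3 x ^ (2 * m).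

Definition gradPhi (m : nat) (x : V3) : V3 :=
  mkV3 (Derive (fun t => Phi m (mkV3 t (c2 x) (c3 x))) (c1 x))
       (Derive (fun t => Phi m (mkV3 (c1 x) t (c3 x))) (c2 x))
       (Derive (fun t => Phi m (mkV3 (c1 x) (c2 x) t)) (c3 x)).

Definition integrand (m : nat) (rho : R) : R :=
  rpow (1 - rho ^ 2) ((2 * INR m - 1) / 2)
  / rpow (1 - (1 - rho ^ 2) ^ m) ((2 * INR m - 1) / (2 * INR m)).

Definition u (m : nat) (alpha : R) : R := RInt (integrand m) alpha 1.

Definition d_s (F : R -> R -> V3) (s v : R) : V3 :=
  mkV3 (Derive (fun t => c1 (F t v)) s)
       (Derive (fun t => c2 (F t v)) s)
       (Derive (fun t => c3 (F t v)) s).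
Definition d_v (F : R -> R -> V3) (s v : R) : V3 :=
  mkV3 (Derive (fun t => c1 (F s t)) v)
       (Derive (fun t => c2 (F s t)) v)
       (Derive (fun t => c3 (F s t)) v).

Definition partials_exist (F : R -> R -> V3) (s v : R) : Prop :=
  ex_derive (fun t => c1 (F t v)) s /\ ex_derive (fun t => c2 (F t v)) s /\
  ex_derive (fun t => c3 (F t v)) s /\
  ex_derive (fun t => c1 (F s t)) v /\ ex_derive (fun t => c2 (F s t)) v /\
  ex_derive (fun t => c3 (F s t)) v.

Definition rot_surf (m : nat) (eps : R) (s v : R) : V3 :=
  mkV3 (s * cos v) (s * sin v) (eps * u m s).

Definition is_BG_map (m : nat) (D : R -> R -> Prop) (F eta : R -> R -> V3) : Prop :=
  forall s v, D s v ->
    Phi m (eta s v) = 1 /\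
    exists mu, 0 < mu /\ gradPhi m (eta s v) = vscal mu (cross (d_s F s v) (d_v F s v)).

(** Minkowski Gaussian curvature at (s,v) equals k: d eta_p is an endomorphism
    of T_pM = span(F_s, F_v), with matrix [[a, b], [c, d]] in the basis (F_s, F_v)
    (eta_s = a F_s + c F_v, eta_v = b F_s + d F_v), and k = det = a d - b c. *)
Definition minkK_eq (F eta : R -> R -> V3) (s v k : R) : Prop :=
  exists a b c d,
    d_s eta s v = vadd (vscal a (d_s F s v)) (vscal c (d_v F s v)) /\
    d_v eta s v = vadd (vscal b (d_s F s v)) (vscal d (d_v F s v)) /\
    k = a * d - b * c.

Definition param_dom (s v : R) : Prop := 0 < s < 1.

(* Main.v *)
Require Import Defs.
From Stdlib Require Import Reals Lra Lia Psatz.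
From Coquelicot Require Import Coquelicot.
Open Scope R_scope.

Lemma exp_pow_n (x : R) (n : nat) : exp x ^ n = exp (INR n * x).
Proof.
  induction n as [|n IH]; simpl.
  - rewrite Rmult_0_l, exp_0; ring.
  - rewrite IH, <- exp_plus. f_equal. destruct n; simpl; ring.
Qed.

Lemma locally_interval (lo hi a : R) : lo < a < hi -> locally a (fun x => lo < x < hi).
Proof.
  intros [H1 H2].
  assert (Hp : 0 < Rmin (a - lo) (hi - a)) by (apply Rmin_glb_lt; lra).
  exists (mkposreal _ Hp). intros y Hy. simpl in Hy.
  unfold ball in Hy; simpl in Hy; unfold AbsRing_ball, abs, minus, plus, opp in Hy; simpl in Hy.
  pose proof (Rmin_l (a - lo) (hi - a)). pose proof (Rmin_r (a - lo) (hi - a)).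
  apply Rabs_def2 in Hy. lra.
Qed.

Lemma pow_lt_strict (a b : R) (k : nat) : (1 <= k)%nat -> 0 <= a < b -> a ^ k < b ^ k.
Proof.
  intros Hk Hab. induction k as [|k IH]; [lia|].
  destruct k as [|k].
  - simpl; lra.
  - assert (a ^ S k < b ^ S k) by (apply IH; lia).
    assert (0 <= a ^ S k) by (apply pow_le; lra).
    change (a * a ^ S k < b * b ^ S k). nra.
Qed.

Lemma pow_inj_nonneg (a b : R) (k : nat) : (1 <= k)%nat -> 0 <= a -> 0 <= b -> a ^ k = b ^ k -> a = b.
Proof.
  intros Hk Ha Hb H.
  destruct (Rtotal_order a b) as [Hlt|[Heq|Hgt]]; auto.
  - exfalso. assert (a ^ k < b ^ k) by (apply pow_lt_strict; [lia|lra]). lra.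
  - exfalso. assert (b ^ k < a ^ k) by (apply pow_lt_strict; [lia|lra]). lra.
Qed.

Lemma one_minus_pow_le (y : R) (n : nat) : 0 <= y <= 1 -> 1 - y ^ n <= INR n * (1 - y).
Proof.
  intros Hy. induction n as [|n IH].
  - simpl; lra.
  - assert (0 <= y ^ n <= 1) by (split; [apply pow_le; lra | rewrite <- (pow1 n); apply pow_incr; lra]).
    change (y ^ S n) with (y * y ^ n). rewrite S_INR. nra.
Qed.

Definition Bf (m : nat) (r : R) := 1 - (1 - r ^ 2) ^ m.
Definition ee (m : nat) := (2 * INR m - 1) / (2 * INR m).
Definition G (m : nat) (r : R) := (1 - r ^ 2) ^ (m - 1) * sqrt (1 - r ^ 2) * exp (- (ee m * ln (Bf m r))).

Lemma Bf_pos m r : (1 <= m)%nat -> 0 < r < 5/4 -> 0 < Bf m r.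
Proof.
  intros Hm Hr. unfold Bf.
  assert (Hx : Rabs (1 - r ^ 2) < 1) by (apply Rabs_def1; nra).
  pose proof (pow_Rabs (1 - r ^ 2) m).
  pose proof (pow_lt_1_compat (Rabs (1 - r ^ 2)) m ltac:(split; [apply Rabs_pos|exact Hx]) ltac:(lia)).
  lra.
Qed.

Lemma exd_cont (f : R -> R) (x : R) : ex_derive f x -> continuous f x.
Proof. intros H. apply (@ex_derive_continuous R_AbsRing R_NormedModule). exact H. Qed.

Lemma G_cont m r : (1 <= m)%nat -> 0 < r < 5/4 -> continuous (G m) r.
Proof.
  intros Hm Hr. pose proof (Bf_pos m r Hm Hr) as HB.
  unfold G.
  apply (continuous_mult (fun y => (1 - y ^ 2) ^ (m - 1) * sqrt (1 - y ^ 2))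
                         (fun y => exp (- (ee m * ln (Bf m y))))).
  - apply (continuous_mult (fun y => (1 - y ^ 2) ^ (m - 1)) (fun y => sqrt (1 - y ^ 2))).
    + apply exd_cont. auto_derive. all: auto.
    + apply continuous_sqrt_comp. apply exd_cont. auto_derive. all: auto.
  - apply exd_cont. unfold Bf in *. auto_derive. replace (r * (r * 1)) with (r ^ 2) by ring. unfold Rminus in HB. lra.
Qed.

Lemma integrand_eq m r : (2 <= m)%nat -> 0 < r < 1 -> integrand m r = G m r.
Proof.
  intros Hm Hr. unfold integrand, rpow, G.
  assert (H1 : 0 < 1 - r ^ 2) by nra.
  assert (HB : 0 < Bf m r) by (apply Bf_pos; [lia|lra]).
  destruct (Rlt_dec 0 (1 - r ^ 2)) as [_|C]; [|lra].
  destruct (Rlt_dec 0 (1 - (1 - r ^ 2) ^ m)) as [_|C]; [|unfold Bf in HB; lra].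
  assert (E : (2 * INR m - 1) / 2 = INR (m - 1) + / 2).
  { rewrite minus_INR by lia. simpl. field. }
  rewrite E, Rpower_plus, Rpower_pow, Rpower_sqrt by lra.
  unfold Rdiv. f_equal. unfold Rpower, ee, Bf. rewrite exp_Ropp. reflexivity.
Qed.

Definition H (m : nat) (a : R) := RInt (G m) a 1.

Lemma G_exRInt m a b : (1 <= m)%nat -> 0 < a < 5/4 -> 0 < b < 5/4 -> ex_RInt (G m) a b.
Proof.
  intros Hm Ha Hb. apply (@ex_RInt_continuous R_CompleteNormedModule). intros z Hz. apply G_cont; auto.
  pose proof (Rmin_glb_lt a b 0). pose proof (Rmax_lub_lt a b (5/4)).
  destruct Hz. split; [apply Rlt_le_trans with (Rmin a b)|apply Rle_lt_trans with (Rmax a b)]; lra.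
Qed.

Lemma H_deriv m a : (1 <= m)%nat -> 0 < a < 5/4 -> is_derive (H m) a (- G m a).
Proof.
  intros Hm Ha.
  apply (is_derive_RInt' (G m) (H m) a 1).
  - apply filter_imp with (2 := locally_interval 0 (5/4) a Ha).
    intros x Hx. unfold H. apply (@RInt_correct R_CompleteNormedModule). apply G_exRInt; auto; lra.
  - apply G_cont; auto.
Qed.

Lemma u_eq_H m x : (2 <= m)%nat -> 0 < x < 1 -> u m x = H m x.
Proof.
  intros Hm Hx. unfold u, H. apply RInt_ext. intros y Hy.
  rewrite Rmin_left in Hy by lra. rewrite Rmax_right in Hy by lra.
  apply integrand_eq; auto; lra.
Qed.

Lemma G_at1 m : (2 <= m)%nat -> G m 1 = 0.
Proof.
  intros Hm. unfold G. replace (1 - 1 ^ 2) with 0 by ring. rewrite pow_i by lia. ring.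
Qed.

Lemma exp_le_mono x y : x <= y -> exp x <= exp y.
Proof. intros [H|H]; [left; apply exp_increasing; auto|subst; lra]. Qed.

Definition cst (m : nat) := (3/4) ^ (m - 1) * sqrt (3/4) / sqrt (INR m).

Lemma cst_pos m : (1 <= m)%nat -> 0 < cst m.
Proof.
  intros Hm. unfold cst. assert (0 < INR m) by (apply lt_0_INR; lia).
  apply Rmult_lt_0_compat; [apply Rmult_lt_0_compat|].
  - apply pow_lt; lra.
  - apply sqrt_lt_R0; lra.
  - apply Rinv_0_lt_compat, sqrt_lt_R0; lra.
Qed.

Lemma G_lower m r : (1 <= m)%nat -> 0 < r <= 1/2 -> cst m / r <= G m r.
Proof.
  intros Hm Hr. assert (HmR : 1 <= INR m) by (apply (le_INR 1); lia).
  assert (HB : 0 < Bf m r) by (apply Bf_pos; auto; lra).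
  assert (HB1 : Bf m r <= INR m * r ^ 2).
  { unfold Bf. pose proof (one_minus_pow_le (1 - r ^ 2) m ltac:(nra)). lra. }
  assert (HB2 : Bf m r <= 1).
  { unfold Bf. assert (0 <= (1 - r^2)^m) by (apply pow_le; nra). lra. }
  assert (Hee : 1/2 <= ee m) by (unfold ee; apply Rmult_le_reg_r with (2 * INR m); [lra|]; field_simplify; lra).
  assert (Hln : ln (Bf m r) <= 0) by (rewrite <- ln_1; apply ln_le; lra).
  assert (E1 : / (sqrt (INR m) * r) <= exp (- (ee m * ln (Bf m r)))).
  { apply Rle_trans with (exp (- (/2 * ln (Bf m r)))).
    - rewrite exp_Ropp. change (exp (/ 2 * ln (Bf m r))) with (Rpower (Bf m r) (/2)).
      rewrite Rpower_sqrt by lra.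
      apply Rinv_le_contravar. apply sqrt_lt_R0; lra.
      replace (sqrt (INR m) * r) with (sqrt (INR m * r ^ 2)).
      + apply sqrt_le_1_alt; lra.
      + rewrite sqrt_mult, sqrt_pow2; try lra. nra.
    - apply exp_le_mono. nra. }
  assert (E2 : (3/4) ^ (m - 1) <= (1 - r ^ 2) ^ (m - 1)) by (apply pow_incr; nra).
  assert (E3 : sqrt (3/4) <= sqrt (1 - r ^ 2)) by (apply sqrt_le_1_alt; nra).
  unfold G, cst.
  assert (0 < sqrt (INR m)) by (apply sqrt_lt_R0; lra).
  assert (0 <= (3/4) ^ (m - 1)) by (apply pow_le; lra).
  assert (0 <= sqrt (3/4)) by apply sqrt_pos.
  replace ((3 / 4) ^ (m - 1) * sqrt (3 / 4) / sqrt (INR m) / r)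
    with ((3 / 4) ^ (m - 1) * sqrt (3 / 4) * / (sqrt (INR m) * r)) by (field; lra).
  apply Rmult_le_compat; try apply Rmult_le_pos; auto.
  - left; apply Rinv_0_lt_compat; nra.
  - apply Rmult_le_compat; auto.
Qed.

Lemma part1 m (hm : (2 <= m)%nat) alpha : 0 < alpha < 1 -> ex_RInt (integrand m) alpha 1.
Proof.
  intros Ha. apply (@ex_RInt_ext R_NormedModule (G m) (integrand m)).
  - intros x Hx. rewrite Rmin_left in Hx by lra. rewrite Rmax_right in Hx by lra.
    symmetry; apply integrand_eq; auto; lra.
  - apply G_exRInt; [lia|lra|lra].
Qed.

Lemma H1_zero m : H m 1 = 0.
Proof. unfold H. rewrite RInt_point. reflexivity. Qed.

Lemma part2 m (hm : (2 <= m)%nat) : filterlim (u m) (at_left 1) (locally 0).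
Proof.
  apply (filterlim_ext_loc (H m)).
  - unfold at_left, within. apply filter_imp with (2 := locally_interval 0 2 1 ltac:(lra)).
    intros x Hx Hx1. symmetry; apply u_eq_H; auto; lra.
  - eapply filterlim_filter_le_1; [apply filter_le_within|].
    rewrite <- (H1_zero m). apply exd_cont. exists (- G m 1). apply H_deriv; [lia|lra].
Qed.

Lemma part3 m (hm : (2 <= m)%nat) alpha : 0 < alpha < 1 -> ex_derive (u m) alpha.
Proof.
  intros Ha. apply (ex_derive_ext_loc (H m)).
  - apply filter_imp with (2 := locally_interval 0 1 alpha Ha).
    intros x Hx. symmetry; apply u_eq_H; auto.
  - exists (- G m alpha). apply H_deriv; [lia|lra].
Qed.

Lemma Derive_u m (hm : (2 <= m)%nat) x : 0 < x < 1 -> Derive (u m) x = - G m x.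
Proof.
  intros Hx. rewrite (Derive_ext_loc (u m) (H m)).
  - apply is_derive_unique. apply H_deriv; [lia|lra].
  - apply filter_imp with (2 := locally_interval 0 1 x Hx).
    intros y Hy. apply u_eq_H; auto.
Qed.

Lemma is_derive_u m (hm : (2 <= m)%nat) x : 0 < x < 1 -> is_derive (u m) x (- G m x).
Proof.
  intros Hx. apply (is_derive_ext_loc (H m)).
  - apply filter_imp with (2 := locally_interval 0 1 x Hx).
    intros y Hy. symmetry; apply u_eq_H; auto.
  - apply H_deriv; [lia|lra].
Qed.

Lemma part4 m (hm : (2 <= m)%nat) : filterlim (Derive (u m)) (at_left 1) (locally 0).
Proof.
  apply (filterlim_ext_loc (fun x => - G m x)).
  - unfold at_left, within. apply filter_imp with (2 := locally_interval 0 2 1 ltac:(lra)).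
    intros x Hx Hx1. symmetry; apply Derive_u; auto; lra.
  - eapply filterlim_filter_le_1; [apply filter_le_within|].
    replace (locally 0) with (locally (- G m 1)) by (rewrite G_at1 by auto; f_equal; ring).
    apply (continuous_opp (G m)). apply G_cont; [lia|lra].
Qed.

Lemma lnint c a b : 0 < a -> 0 < b -> RInt (fun x => c / x) a b = c * ln b - c * ln a.
Proof.
  intros Ha Hb.
  assert (Hm : 0 < Rmin a b) by (apply Rmin_glb_lt; auto).
  assert (HI : is_RInt (fun x => c / x) a b (minus ((fun x => c * ln x) b) ((fun x => c * ln x) a))).
  { apply (@is_RInt_derive R_CompleteNormedModule (fun x => c * ln x)).
    - intros x Hx. auto_derive; [lra|field; lra].
    - intros x Hx. apply exd_cont. auto_derive. lra. }
  rewrite (is_RInt_unique _ _ _ _ HI). reflexivity.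
Qed.

Lemma G_nonneg m r : 0 < r < 1 -> 0 <= G m r.
Proof.
  intros Hr. unfold G. apply Rmult_le_pos; [apply Rmult_le_pos|].
  - apply pow_le; nra.
  - apply sqrt_pos.
  - left; apply exp_pos.
Qed.

Lemma H_lower m (hm : (2 <= m)%nat) a : 0 < a < 1/2 -> cst m * (ln (1/2) - ln a) <= H m a.
Proof.
  intros Ha. unfold H.
  rewrite <- (RInt_Chasles (G m) a (1/2) 1) by (apply G_exRInt; [lia|lra|lra]).
  change (plus (RInt (G m) a (1 / 2)) (RInt (G m) (1 / 2) 1)) with
         (RInt (G m) a (1 / 2) + RInt (G m) (1 / 2) 1).
  assert (0 <= RInt (G m) (1 / 2) 1).
  { apply RInt_ge_0; [lra| apply G_exRInt; [lia|lra|lra] |]. intros x Hx. apply G_nonneg; lra. }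
  assert (RInt (fun x => cst m / x) a (1/2) <= RInt (G m) a (1/2)).
  { apply RInt_le; [lra| |apply G_exRInt; [lia|lra|lra]|].
    - apply (@ex_RInt_continuous R_CompleteNormedModule). intros z Hz.
      assert (0 < Rmin a (1/2)) by (apply Rmin_glb_lt; lra).
      apply exd_cont. auto_derive. lra.
    - intros x Hx. apply G_lower; [lia|lra]. }
  rewrite lnint in H1 by lra. lra.
Qed.

Lemma part5 m (hm : (2 <= m)%nat) : filterlim (u m) (at_right 0) (Rbar_locally p_infty).
Proof.
  intros P [M HM]. unfold filtermap.
  assert (Hc : 0 < cst m) by (apply cst_pos; lia).
  set (d := Rmin (1/2) (exp (ln (1/2) - (Rabs M + 1) / cst m))).
  assert (Hd : 0 < d) by (apply Rmin_glb_lt; [lra| apply exp_pos]).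
  exists (mkposreal d Hd). intros y Hy Hy0. simpl in Hy.
  unfold ball in Hy; simpl in Hy; unfold AbsRing_ball, abs, minus, plus, opp in Hy; simpl in Hy.
  rewrite Ropp_0, Rplus_0_r, Rabs_right in Hy by lra.
  assert (Hy1 : y < 1/2) by (pose proof (Rmin_l (1/2) (exp (ln (1/2) - (Rabs M + 1) / cst m))); unfold d in Hy; lra).
  assert (Hy2 : y < exp (ln (1/2) - (Rabs M + 1) / cst m)) by
    (pose proof (Rmin_r (1/2) (exp (ln (1/2) - (Rabs M + 1) / cst m))); unfold d in Hy; lra).
  apply HM. rewrite u_eq_H by (auto; lra).
  eapply Rlt_le_trans; [|apply H_lower; auto; lra].
  apply ln_increasing in Hy2; auto. rewrite ln_exp in Hy2.
  assert (Hq : (Rabs M + 1) / cst m < ln (1/2) - ln y) by lra.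
  apply Rmult_lt_compat_l with (r := cst m) in Hq; auto.
  replace (cst m * ((Rabs M + 1) / cst m)) with (Rabs M + 1) in Hq by (field; lra).
  pose proof (Rle_abs M). lra.
Qed.

Local Notation X1 := Defs.c1.
Local Notation X2 := Defs.c2.
Local Notation X3 := Defs.c3.

Lemma gradPhi_eq m x : (1 <= m)%nat ->
  gradPhi m x = mkV3 (2 * INR m * X1 x * (X1 x ^ 2 + X2 x ^ 2) ^ (m - 1))
                     (2 * INR m * X2 x * (X1 x ^ 2 + X2 x ^ 2) ^ (m - 1))
                     (2 * INR m * X3 x ^ (2 * m - 1)).
Proof.
  intros Hm. unfold gradPhi, Phi. cbn [Defs.c1 Defs.c2 Defs.c3].
  f_equal; apply is_derive_unique; auto_derive; auto.
  - replace (X1 x * (X1 x * 1) + X2 x * (X2 x * 1)) with (X1 x ^ 2 + X2 x ^ 2) by ring.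
    replace (Init.Nat.pred m) with (m - 1)%nat by lia. ring.
  - replace (X1 x * (X1 x * 1) + X2 x * (X2 x * 1)) with (X1 x ^ 2 + X2 x ^ 2) by ring.
    replace (Init.Nat.pred m) with (m - 1)%nat by lia. ring.
  - replace (Init.Nat.pred (m + (m + 0))) with (2 * m - 1)%nat by lia.
    replace (m + (m + 0))%nat with (2 * m)%nat by lia. rewrite mult_INR. simpl. ring.
Qed.

Lemma cs1 v : cos v ^ 2 + sin v ^ 2 = 1.
Proof. pose proof (sin2_cos2 v) as E. unfold Rsqr in E. simpl. lra. Qed.

Definition Fs (m : nat) (eps s v : R) := mkV3 (cos v) (sin v) (eps * (- G m s)).
Definition Fv (s v : R) := mkV3 (- (s * sin v)) (s * cos v) 0.

Lemma ds_rot m eps s v : (2 <= m)%nat -> 0 < s < 1 -> d_s (rot_surf m eps) s v = Fs m eps s v.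
Proof.
  intros Hm Hs. unfold d_s, rot_surf, Fs. cbn [Defs.c1 Defs.c2 Defs.c3]. f_equal.
  - apply is_derive_unique. auto_derive; auto; ring.
  - apply is_derive_unique. auto_derive; auto; ring.
  - apply is_derive_unique. apply (is_derive_scal (u m)). apply is_derive_u; auto.
Qed.

Lemma dv_rot m eps s v : d_v (rot_surf m eps) s v = Fv s v.
Proof.
  unfold d_v, rot_surf, Fv. cbn [Defs.c1 Defs.c2 Defs.c3]. f_equal.
  - apply is_derive_unique. auto_derive; auto; ring.
  - apply is_derive_unique. auto_derive; auto; ring.
  - apply is_derive_unique. auto_derive; auto; ring.
Qed.

Lemma cross_eq m eps s v : (eps = 1 \/ eps = -1) ->
  cross (Fs m eps s v) (Fv s v) = mkV3 (eps * G m s * s * cos v) (eps * G m s * s * sin v) s.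
Proof.
  intros He. unfold cross, Fs, Fv. cbn [Defs.c1 Defs.c2 Defs.c3]. f_equal.
  - ring.
  - ring.
  - transitivity (s * (cos v ^ 2 + sin v ^ 2)); [ring|]. rewrite cs1; ring.
Qed.

Lemma podd r n : r ^ (S (n + n)) = r * (r ^ n) ^ 2.
Proof. change (r ^ S (n + n)) with (r * r ^ (n + n)). rewrite pow_add. ring. Qed.

Lemma pt_facts n A B C (x : V3) mu : 0 < C -> 0 < mu ->
  Phi (S n) x = 1 ->
  gradPhi (S n) x = vscal mu (mkV3 A B C) ->
  0 < X3 x /\
  0 <= (X1 x ^ 2 + X2 x ^ 2) / X3 x ^ 2 /\
  ((X1 x ^ 2 + X2 x ^ 2) / X3 x ^ 2) ^ (S (n + n)) * C ^ 2 = A ^ 2 + B ^ 2 /\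
  (X3 x ^ 2) ^ (S n) * (((X1 x ^ 2 + X2 x ^ 2) / X3 x ^ 2) ^ (S n) + 1) = 1.
Proof.
  intros HC Hmu HP HG.
  rewrite gradPhi_eq in HG by lia. unfold vscal in HG. cbn [Defs.c1 Defs.c2 Defs.c3] in HG.
  pose proof (f_equal Defs.c1 HG) as E1. pose proof (f_equal Defs.c2 HG) as E2.
  pose proof (f_equal Defs.c3 HG) as E3. clear HG.
  cbn [Defs.c1 Defs.c2 Defs.c3] in E1, E2, E3.
  unfold Phi in HP.
  replace (S n - 1)%nat with n in E1, E2 by lia.
  replace (2 * S n - 1)%nat with (S (2 * n)) in E3 by lia.
  replace (2 * S n)%nat with (2 * S n)%nat in HP by lia.
  set (q := X1 x ^ 2 + X2 x ^ 2) in *.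
  set (a := X3 x) in *.
  rewrite pow_mult in HP. change (a ^ S (2 * n)) with (a * a ^ (2 * n)) in E3.
  rewrite pow_mult in E3.
  set (p := a ^ 2) in *.
  assert (HM : 0 < 2 * INR (S n)) by (rewrite S_INR; pose proof (pos_INR n); lra).
  assert (Hpn : 0 <= p ^ n) by (apply pow_le; unfold p; nra).
  assert (Ha : 0 < a).
  { destruct (Rle_or_lt a 0) as [Hle|]; auto. exfalso.
    assert (a * p ^ n <= 0) by nra. assert (0 < mu * C) by nra. nra. }
  assert (Hp : 0 < p) by (unfold p; nra).
  assert (Hq : 0 <= q) by (unfold q; nra).
  set (r := q / p).
  assert (Hqr : q = r * p) by (unfold r; field; lra).
  assert (Hr : 0 <= r) by (unfold r; apply Rmult_le_pos; [lra| left; apply Rinv_0_lt_compat; lra]).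
  split; [exact Ha|]. split; [exact Hr|]. split.
  - rewrite podd.
    assert (S1 : (2 * INR (S n)) ^ 2 * q * (q ^ n) ^ 2 = mu ^ 2 * (A ^ 2 + B ^ 2)).
    { transitivity ((2 * INR (S n) * X1 x * q ^ n) ^ 2 + (2 * INR (S n) * X2 x * q ^ n) ^ 2).
      - unfold q at 1. ring.
      - rewrite E1, E2. ring. }
    assert (S2 : (2 * INR (S n)) ^ 2 * p * (p ^ n) ^ 2 = mu ^ 2 * C ^ 2).
    { transitivity ((2 * INR (S n) * (a * p ^ n)) ^ 2).
      - unfold p at 1. ring.
      - rewrite E3. ring. }
    rewrite Hqr, (Rpow_mult_distr r p n) in S1.
    assert (S3 : mu ^ 2 * (r * (r ^ n) ^ 2 * C ^ 2) = mu ^ 2 * (A ^ 2 + B ^ 2)).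
    { rewrite <- S1. transitivity (r * (r ^ n) ^ 2 * (mu ^ 2 * C ^ 2)); [ring|]. rewrite <- S2. ring. }
    apply Rmult_eq_reg_l in S3; auto. apply pow_nonzero; lra.
  - rewrite Hqr, (Rpow_mult_distr r p (S n)) in HP. lra.
Qed.

Lemma BG_unique m A B C x y mu nu : (1 <= m)%nat -> 0 < C -> 0 < mu -> 0 < nu ->
  Phi m x = 1 -> Phi m y = 1 ->
  gradPhi m x = vscal mu (mkV3 A B C) -> gradPhi m y = vscal nu (mkV3 A B C) ->
  0 < X1 y ^ 2 + X2 y ^ 2 -> x = y.
Proof.
  intros Hm HC Hmu Hnu HPx HPy HGx HGy Hqy.
  destruct m as [|n]; [lia|].
  destruct (pt_facts n A B C x mu HC Hmu HPx HGx) as (Hax & Hrx & Erx & Px).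
  destruct (pt_facts n A B C y nu HC Hnu HPy HGy) as (Hay & Hry & Ery & Py).
  set (rx := (X1 x ^ 2 + X2 x ^ 2) / X3 x ^ 2) in *.
  set (ry := (X1 y ^ 2 + X2 y ^ 2) / X3 y ^ 2) in *.
  assert (Er : rx = ry).
  { apply (pow_inj_nonneg _ _ (S (n + n))); auto; [lia|].
    apply Rmult_eq_reg_r with (C ^ 2); [|apply pow_nonzero; lra]. lra. }
  rewrite <- Er in Py.
  assert (HK : 0 < rx ^ S n + 1) by (pose proof (pow_le rx (S n) Hrx); lra).
  assert (Ep : X3 x ^ 2 = X3 y ^ 2).
  { apply (pow_inj_nonneg _ _ (S n)); [lia|nra|nra|].
    apply Rmult_eq_reg_r with (rx ^ S n + 1); lra. }
  assert (Ea : X3 x = X3 y) by (apply (pow_inj_nonneg _ _ 2); [lia|lra|lra|auto]).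
  assert (Eq : X1 x ^ 2 + X2 x ^ 2 = X1 y ^ 2 + X2 y ^ 2).
  { transitivity (rx * X3 x ^ 2); [unfold rx; field; lra|].
    rewrite Er, Ea. unfold ry; field; lra. }
  rewrite gradPhi_eq in HGx, HGy by lia. unfold vscal in HGx, HGy.
  cbn [Defs.c1 Defs.c2 Defs.c3] in HGx, HGy.
  pose proof (f_equal Defs.c1 HGx) as Ex1. pose proof (f_equal Defs.c2 HGx) as Ex2.
  pose proof (f_equal Defs.c3 HGx) as Ex3.
  pose proof (f_equal Defs.c1 HGy) as Ey1. pose proof (f_equal Defs.c2 HGy) as Ey2.
  pose proof (f_equal Defs.c3 HGy) as Ey3. clear HGx HGy.
  cbn [Defs.c1 Defs.c2 Defs.c3] in Ex1, Ex2, Ex3, Ey1, Ey2, Ey3.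
  rewrite Ea in Ex3.
  assert (HM : 0 < 2 * INR (S n)) by (rewrite S_INR; pose proof (pos_INR n); lra).
  assert (Emu : mu = nu) by (apply Rmult_eq_reg_r with C; lra).
  subst nu. rewrite Eq in Ex1, Ex2.
  assert (Hqn : 0 < (X1 y ^ 2 + X2 y ^ 2) ^ (S n - 1)) by (apply pow_lt; lra).
  assert (E1 : X1 x = X1 y).
  { apply Rmult_eq_reg_r with (2 * INR (S n) * (X1 y ^ 2 + X2 y ^ 2) ^ (S n - 1)); [|nra].
    transitivity (mu * A); [rewrite <- Ex1; ring| rewrite <- Ey1; ring]. }
  assert (E2 : X2 x = X2 y).
  { apply Rmult_eq_reg_r with (2 * INR (S n) * (X1 y ^ 2 + X2 y ^ 2) ^ (S n - 1)); [|nra].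
    transitivity (mu * B); [rewrite <- Ex2; ring| rewrite <- Ey2; ring]. }
  destruct x, y; cbn [Defs.c1 Defs.c2 Defs.c3] in *. subst. reflexivity.
Qed.

Definition tt (s : R) := sqrt (1 - s ^ 2).
Definition hh (m : nat) (s : R) := exp (ln (Bf m s) / (2 * INR m)).
Definition eta0 (m : nat) (eps : R) (s v : R) : V3 :=
  mkV3 (eps * tt s * cos v) (eps * tt s * sin v) (hh m s).

Lemma tt_sq s : 0 < s < 1 -> tt s ^ 2 = 1 - s ^ 2.
Proof. intros Hs. unfold tt. apply pow2_sqrt. nra. Qed.

Lemma tt_pos s : 0 < s < 1 -> 0 < tt s.
Proof. intros Hs. unfold tt. apply sqrt_lt_R0. nra. Qed.

Lemma hh_pow2m m s : (1 <= m)%nat -> 0 < s < 1 -> hh m s ^ (2 * m) = Bf m s.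
Proof.
  intros Hm Hs. assert (0 < INR m) by (apply lt_0_INR; lia).
  unfold hh. rewrite exp_pow_n, mult_INR.
  replace (INR 2 * INR m * (ln (Bf m s) / (2 * INR m))) with (ln (Bf m s)) by (simpl; field; lra).
  apply exp_ln. apply Bf_pos; auto; lra.
Qed.

Lemma hh_pow m s : (1 <= m)%nat -> hh m s ^ (2 * m - 1) = exp (ee m * ln (Bf m s)).
Proof.
  intros Hm. assert (0 < INR m) by (apply lt_0_INR; lia).
  unfold hh. rewrite exp_pow_n, minus_INR, mult_INR by lia. f_equal. unfold ee. simpl. field. lra.
Qed.

Lemma exp_mee m s : (1 <= m)%nat -> 0 < Bf m s ->
  exp (- (ee m * ln (Bf m s))) = exp (ln (Bf m s) * / (2 * INR m)) * / Bf m s.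
Proof.
  intros Hm HB. assert (0 < INR m) by (apply lt_0_INR; lia).
  replace (- (ee m * ln (Bf m s))) with (ln (Bf m s) * / (2 * INR m) + - ln (Bf m s)) by (unfold ee; field; lra).
  rewrite exp_plus, exp_Ropp, exp_ln; auto.
Qed.

Lemma sq_eps_trig eps a v : (eps = 1 \/ eps = -1) ->
  (eps * a * cos v) ^ 2 + (eps * a * sin v) ^ 2 = a ^ 2.
Proof.
  intros He. transitivity (eps ^ 2 * a ^ 2 * (cos v ^ 2 + sin v ^ 2)); [ring|].
  rewrite cs1. destruct He; subst; ring.
Qed.

Lemma eta0_q m eps s v : (eps = 1 \/ eps = -1) -> 0 < s < 1 ->
  X1 (eta0 m eps s v) ^ 2 + X2 (eta0 m eps s v) ^ 2 = 1 - s ^ 2.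
Proof. intros He Hs. unfold eta0. cbn [Defs.c1 Defs.c2 Defs.c3]. rewrite sq_eps_trig, tt_sq; auto. Qed.

Lemma eta0_Phi m eps s v : (1 <= m)%nat -> (eps = 1 \/ eps = -1) -> 0 < s < 1 ->
  Phi m (eta0 m eps s v) = 1.
Proof.
  intros Hm He Hs. unfold Phi. rewrite eta0_q by auto. unfold eta0. cbn [Defs.c3].
  rewrite hh_pow2m by auto. unfold Bf. ring.
Qed.

Definition mu0 (m : nat) (s : R) := 2 * INR m * hh m s ^ (2 * m - 1) / s.

Lemma mu0_pos m s : (1 <= m)%nat -> 0 < s -> 0 < mu0 m s.
Proof.
  intros Hm Hs. assert (0 < INR m) by (apply lt_0_INR; lia).
  unfold mu0. assert (0 < hh m s ^ (2 * m - 1)) by (apply pow_lt; unfold hh; apply exp_pos).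
  apply Rmult_lt_0_compat; [nra|]. apply Rinv_0_lt_compat; auto.
Qed.

Lemma eta0_grad m eps s v : (1 <= m)%nat -> (eps = 1 \/ eps = -1) -> 0 < s < 1 ->
  gradPhi m (eta0 m eps s v) =
  vscal (mu0 m s) (mkV3 (eps * G m s * s * cos v) (eps * G m s * s * sin v) s).
Proof.
  intros Hm He Hs. rewrite gradPhi_eq by auto. rewrite eta0_q by auto.
  unfold vscal, eta0, mu0, G. cbn [Defs.c1 Defs.c2 Defs.c3].
  rewrite hh_pow by auto. rewrite exp_Ropp.
  assert (0 < exp (ee m * ln (Bf m s))) by apply exp_pos.
  f_equal.
  - unfold tt. field. lra.
  - unfold tt. field. lra.
  - field. lra.
Qed.

Lemma BG_eta0 m eps : (1 <= m)%nat -> (2 <= m)%nat -> (eps = 1 \/ eps = -1) ->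
  is_BG_map m param_dom (rot_surf m eps) (eta0 m eps).
Proof.
  intros Hm1 Hm He s v Hs. unfold param_dom in Hs. split.
  - apply eta0_Phi; auto.
  - exists (mu0 m s). split; [apply mu0_pos; auto; lra|].
    rewrite ds_rot, dv_rot, cross_eq by auto. apply eta0_grad; auto.
Qed.

Lemma BG_eq m eps eta s v : (2 <= m)%nat -> (eps = 1 \/ eps = -1) ->
  is_BG_map m param_dom (rot_surf m eps) eta -> 0 < s < 1 -> eta s v = eta0 m eps s v.
Proof.
  intros Hm He Hbg Hs.
  destruct (Hbg s v Hs) as [HP [mu [Hmu HG]]].
  rewrite ds_rot, dv_rot, cross_eq in HG by auto.
  apply (BG_unique m (eps * G m s * s * cos v) (eps * G m s * s * sin v) s _ _ mu (mu0 m s)); auto; try lia; try lra.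
  - apply mu0_pos; lia || lra.
  - apply eta0_Phi; auto; lia.
  - apply eta0_grad; auto; lia.
  - rewrite eta0_q by auto. nra.
Qed.

Lemma tt_cos_deriv eps c s : 0 < s < 1 ->
  is_derive (fun t => eps * tt t * c) s (eps * (- s / tt s) * c).
Proof.
  intros Hs. pose proof (tt_pos s Hs) as Ht. unfold tt in *. auto_derive.
  - nra.
  - replace (1 + - (s * (s * 1))) with (1 - s ^ 2) by ring. field. lra.
Qed.

Definition hd (m : nat) (s : R) := s * (1 - s ^ 2) ^ (m - 1) * exp (- (ee m * ln (Bf m s))).

Lemma hh_deriv m s : (1 <= m)%nat -> 0 < s < 1 -> is_derive (hh m) s (hd m s).
Proof.
  intros Hm Hs. assert (HB : 0 < Bf m s) by (apply Bf_pos; auto; lra).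
  assert (0 < INR m) by (apply lt_0_INR; lia).
  unfold hh, hd. rewrite exp_mee by auto. unfold Bf in *. auto_derive.
  - replace (1 + - (s * (s * 1))) with (1 - s ^ 2) by ring. lra.
  - replace (1 + - (s * (s * 1))) with (1 - s ^ 2) by ring.
    replace (Init.Nat.pred m) with (m - 1)%nat by lia.
    replace (1 + - (1 - s ^ 2) ^ m) with (1 - (1 - s ^ 2) ^ m) by ring.
    field. lra.
Qed.

Definition dsE (m : nat) (eps s v : R) :=
  mkV3 (eps * (- s / tt s) * cos v) (eps * (- s / tt s) * sin v) (hd m s).
Definition dvE (eps s v : R) :=
  mkV3 (- (eps * tt s * sin v)) (eps * tt s * cos v) 0.

Lemma eta0_partials m eps s v : (1 <= m)%nat -> 0 < s < 1 ->
  is_derive (fun t => X1 (eta0 m eps t v)) s (X1 (dsE m eps s v)) /\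
  is_derive (fun t => X2 (eta0 m eps t v)) s (X2 (dsE m eps s v)) /\
  is_derive (fun t => X3 (eta0 m eps t v)) s (X3 (dsE m eps s v)) /\
  is_derive (fun t => X1 (eta0 m eps s t)) v (X1 (dvE eps s v)) /\
  is_derive (fun t => X2 (eta0 m eps s t)) v (X2 (dvE eps s v)) /\
  is_derive (fun t => X3 (eta0 m eps s t)) v (X3 (dvE eps s v)).
Proof.
  intros Hm Hs. unfold eta0, dsE, dvE. cbn [Defs.c1 Defs.c2 Defs.c3].
  split; [apply tt_cos_deriv; auto|].
  split; [apply tt_cos_deriv; auto|].
  split; [apply hh_deriv; auto|].
  split; [auto_derive; auto; ring|].
  split; [auto_derive; auto; ring|].
  auto_derive; auto.
Qed.

Lemma minkK_eta0 m eps s v : (2 <= m)%nat -> (eps = 1 \/ eps = -1) -> 0 < s < 1 ->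
  minkK_eq (rot_surf m eps) (fun s v => dsE m eps s v) s v (-1) -> True.
Proof. auto. Qed.

Lemma eta_is_derive m eps eta s v : (2 <= m)%nat -> (eps = 1 \/ eps = -1) ->
  is_BG_map m param_dom (rot_surf m eps) eta -> 0 < s < 1 ->
  is_derive (fun t => X1 (eta t v)) s (X1 (dsE m eps s v)) /\
  is_derive (fun t => X2 (eta t v)) s (X2 (dsE m eps s v)) /\
  is_derive (fun t => X3 (eta t v)) s (X3 (dsE m eps s v)) /\
  is_derive (fun t => X1 (eta s t)) v (X1 (dvE eps s v)) /\
  is_derive (fun t => X2 (eta s t)) v (X2 (dvE eps s v)) /\
  is_derive (fun t => X3 (eta s t)) v (X3 (dvE eps s v)).
Proof.
  intros Hm He Hbg Hs.
  destruct (eta0_partials m eps s v ltac:(lia) Hs) as (D1 & D2 & D3 & D4 & D5 & D6).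
  assert (L : locally s (fun t => eta0 m eps t v = eta t v)).
  { apply filter_imp with (2 := locally_interval 0 1 s Hs). intros t Ht. symmetry; apply BG_eq; auto. }
  assert (A : forall t, eta0 m eps s t = eta s t) by (intros t; symmetry; apply BG_eq; auto).
  refine (conj _ (conj _ (conj _ (conj _ (conj _ _))))).
  - apply (@is_derive_ext_loc R_AbsRing R_NormedModule (fun t => X1 (eta0 m eps t v))); auto.
    apply filter_imp with (2 := L). intros t Ht; rewrite Ht; reflexivity.
  - apply (@is_derive_ext_loc R_AbsRing R_NormedModule (fun t => X2 (eta0 m eps t v))); auto.
    apply filter_imp with (2 := L). intros t Ht; rewrite Ht; reflexivity.
  - apply (@is_derive_ext_loc R_AbsRing R_NormedModule (fun t => X3 (eta0 m eps t v))); auto.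
    apply filter_imp with (2 := L). intros t Ht; rewrite Ht; reflexivity.
  - apply (@is_derive_ext R_AbsRing R_NormedModule (fun t => X1 (eta0 m eps s t))); auto. intros t; rewrite A; reflexivity.
  - apply (@is_derive_ext R_AbsRing R_NormedModule (fun t => X2 (eta0 m eps s t))); auto. intros t; rewrite A; reflexivity.
  - apply (@is_derive_ext R_AbsRing R_NormedModule (fun t => X3 (eta0 m eps s t))); auto. intros t; rewrite A; reflexivity.
Qed.

Lemma eta_final m eps eta s v : (2 <= m)%nat -> (eps = 1 \/ eps = -1) ->
  is_BG_map m param_dom (rot_surf m eps) eta -> param_dom s v ->
  partials_exist eta s v /\ minkK_eq (rot_surf m eps) eta s v (-1).
Proof.
  intros Hm He Hbg Hs. unfold param_dom in Hs.
  destruct (eta_is_derive m eps eta s v Hm He Hbg Hs) as (D1 & D2 & D3 & D4 & D5 & D6).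
  split.
  - unfold partials_exist. refine (conj _ (conj _ (conj _ (conj _ (conj _ _))))); eexists; eauto.
  - assert (Es : d_s eta s v = dsE m eps s v).
    { unfold d_s. transitivity (mkV3 (X1 (dsE m eps s v)) (X2 (dsE m eps s v)) (X3 (dsE m eps s v))).
      - f_equal; apply is_derive_unique; assumption.
      - reflexivity. }
    assert (Ev : d_v eta s v = dvE eps s v).
    { unfold d_v. transitivity (mkV3 (X1 (dvE eps s v)) (X2 (dvE eps s v)) (X3 (dvE eps s v))).
      - f_equal; apply is_derive_unique; assumption.
      - reflexivity. }
    pose proof (tt_pos s Hs) as Ht.
    exists (eps * (- s / tt s)), 0, 0, (eps * tt s / s).
    rewrite Es, Ev, ds_rot, dv_rot by auto.
    unfold dsE, dvE, Fs, Fv, vadd, vscal, hd, G. cbn [Defs.c1 Defs.c2 Defs.c3].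
    split; [|split].
    + f_equal; try ring.
      unfold tt in *. destruct He; subst; field; lra.
    + f_equal; try (field; lra).
    + destruct He; subst; field; lra.
Qed.

Theorem mainTheorem6 (m : nat) (hm : (2 <= m)%nat) :
  (forall alpha, 0 < alpha < 1 -> ex_RInt (integrand m) alpha 1) /\
  filterlim (u m) (at_left 1) (locally 0) /\
  (forall alpha, 0 < alpha < 1 -> ex_derive (u m) alpha) /\
  filterlim (Derive (u m)) (at_left 1) (locally 0) /\
  filterlim (u m) (at_right 0) (Rbar_locally p_infty) /\
  (forall eps, (eps = 1 \/ eps = -1) ->
     (exists eta, is_BG_map m param_dom (rot_surf m eps) eta) /\
     (forall eta, is_BG_map m param_dom (rot_surf m eps) eta ->
        forall s v, param_dom s v ->
          partials_exist eta s v /\ minkK_eq (rot_surf m eps) eta s v (-1))).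
Proof.
  split; [intros; apply part1; auto|].
  split; [apply part2; auto|].
  split; [intros; apply part3; auto|].
  split; [apply part4; auto|].
  split; [apply part5; auto|].
  intros eps He. split.
  - exists (eta0 m eps). apply BG_eta0; auto; lia.
  - intros eta Hbg s v Hs. apply eta_final; auto.
Qed.
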